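(* Let $R$ be a commutative ring with $1\neq 0$, $M$ an $R$-module, and $S\subseteq T$ multiplicatively closed subsets of $R$. Then every $S$-quasi-copure submodule of $M$ is a $T$-quasi-copure submodule of $M$, i.e., $C^{S}_{q}(M)\subseteq C^{T}_{q}(M)$.
   Context: All rings are commutative with $1\neq 0$ and all modules are unital. A multiplicatively closed subset (m.c.s.) $S$ of $R$ is a subset with $0\notin S$, $1\in S$, and $ss'\in S$ for all $s,s'\in S$. For an ideal $I$ and submodule $L$, $(L:_M I)=\{m\in M: Im\subseteq L\}$, $(0:_M I)=\{m\in M: Im=0\}$, $(L:_R M)=\{r\in R: rM\subseteq L\}$. A submodule $P$ of $M$ with $(P:_R M)\cap S=\emptyset$ is $S$-prime if there exists $s\in S$ such that whenever $am\in P$ ($a\in R$, $m\in M$), then $sa\in(P:_R M)$ or $sm\in P$. A submodule $L$ of $M$ is $S$-copure if there exists $s\in S$ such that $s(L:_M I)\subseteq L+(0:_M I)$ for every ideal $I$ of $R$. A submodule $N$ of $M$ is $S$-quasi-copure if every $S$-prime submodule of $M$ containing $N$ is $S$-copure; $C^{S}_{q}(M)$ denotes the set of $S$-quasi-copure submodules of $M$. *)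

(* Defs.v *)
From mathcomp Require Import all_boot all_algebra.
Set Implicit Arguments. Unset Strict Implicit. Unset Printing Implicit Defensive.
Import GRing.Theory.
Local Open Scope ring_scope.

Section ModuleDefs.
Variables (R : comNzRingType) (M : lmodType R).

Definition is_submodule (L : M -> Prop) : Prop :=
  [/\ L 0, (forall x y, L x -> L y -> L (x + y)) & (forall (r : R) x, L x -> L (r *: x))].

Definition is_ideal (I : R -> Prop) : Prop :=
  [/\ I 0, (forall a b, I a -> I b -> I (a + b)) & (forall r a, I a -> I (r * a))].

Definition is_mcs (S : R -> Prop) : Prop :=
  [/\ ~ S 0, S 1 & (forall s s', S s -> S s' -> S (s * s'))].

Definition colon_RM (L : M -> Prop) : R -> Prop := fun r => forall m : M, L (r *: m).
Definition colon_MI (L : M -> Prop) (I : R -> Prop) : M -> Prop :=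
  fun m => forall a, I a -> L (a *: m).
Definition ann_MI (I : R -> Prop) : M -> Prop := fun m => forall a, I a -> a *: m = 0.

Definition S_prime (S : R -> Prop) (P : M -> Prop) : Prop :=
  [/\ is_submodule P,
      (forall r, colon_RM P r -> ~ S r) &
      exists2 s, S s & forall (a : R) (m : M), P (a *: m) ->
                         colon_RM P (s * a) \/ P (s *: m)].

Definition S_copure (S : R -> Prop) (L : M -> Prop) : Prop :=
  is_submodule L /\
  exists2 s, S s & forall I : R -> Prop, is_ideal I ->
    forall m, colon_MI L I m ->
      exists l, exists n, [/\ L l, ann_MI I n & s *: m = l + n].

Definition S_quasi_copure (S : R -> Prop) (N : M -> Prop) : Prop :=
  is_submodule N /\
  forall P : M -> Prop, S_prime S P -> (forall x, N x -> P x) -> S_copure S P.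

End ModuleDefs.

(* Main.v *)
Require Import Defs.
From mathcomp Require Import all_boot all_algebra.
Local Open Scope ring_scope.
Import GRing.Theory.

Theorem theorem3p5 (R : comNzRingType) (M : lmodType R) (S T : R -> Prop)
  (hS : is_mcs S) (hT : is_mcs T) (hST : forall r, S r -> T r)
  (N : M -> Prop) :
  S_quasi_copure S N -> S_quasi_copure T N.
Proof.
case=> hN H; split=> // P [[P0 PD PZ] Pcol [t Tt Pt]] NP.
case: hS => _ S1 _; case: hT => _ T1 TM.
set Q : M -> Prop := fun m => P (t *: m).
have hQ : S_prime S Q.
  split.
  - split; rewrite /Q ?scaler0 //.
      by move=> x y Hx Hy; rewrite scalerDr; apply: PD.
    by move=> r x Hx; rewrite scalerA mulrC -scalerA; apply: PZ.
  - move=> r Hr Sr; apply: (Pcol (t * r)); last by apply: (TM) => //; apply: hST.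
    by move=> m; rewrite -scalerA; apply: Hr.
  - exists 1 => // a m; rewrite /Q => Ham.
    have : P (a *: (t *: m)) by rewrite scalerA mulrC -scalerA.
    case/Pt => [Hc|Httm].
      by left=> m'; rewrite mul1r scalerA; apply: Hc.
    have : P ((t * t) *: m) by rewrite -scalerA.
    case/Pt => [Hc|]; last by right; rewrite scale1r.
    by exfalso; apply: (Pcol _ Hc); apply: (TM) => //; apply: (TM).
have NQ : forall x, N x -> Q x by move=> x /NP Px; apply: PZ.
case: (H Q hQ NQ) => _ [s Ss Hs].
split; first by split.
exists (t * s); first by apply: (TM) => //; apply: hST.
move=> I hI m Hm.
have HmQ : colon_MI Q I m.
  by move=> a Ia; rewrite /Q; apply: PZ; apply: Hm.
case: (Hs I hI m HmQ) => l [n [Ql Nn E]].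
exists (t *: l), (t *: n); split => //.
  by move=> a Ia; rewrite scalerA mulrC -scalerA Nn // scaler0.
by rewrite -scalerA E scalerDr.
Qed.
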